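(* The following two statements are equivalent: (a) Every 3-connected cubic graph $G$ admits a proper $5$-edge-coloring $c$ with $|N_G(c)|\le 7$. (b) There exists a sublinear function $f:\mathbb{N}\to\mathbb{N}$ such that every 3-connected cubic graph $G$ admits a proper $5$-edge-coloring $c$ with $|N_G(c)|\le f(|V(G)|)$.
   Context: Graphs are finite, undirected, loopless, and may contain parallel edges. A proper $k$-edge-coloring of $G$ is a map $c:E(G)\to\{1,\dots,k\}$ with adjacent edges receiving different colors. For such $c$ and a vertex $v$, $S_c(v)$ is the set of colors on edges incident to $v$. An edge $uv$ of a cubic graph is poor if $|S_c(u)\cup S_c(v)|=3$, rich if $|S_c(u)\cup S_c(v)|=5$, and abnormal if it is neither poor nor rich. $N_G(c)$ denotes the set of abnormal edges of $G$ with respect to $c$. A function $f:\mathbb{N}\to\mathbb{N}$ is sublinear if $\lim_{n\to\infty} f(n)/n=0$. *)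

(* Defs.v *)
From Stdlib Require Import Reals.
From mathcomp Require Import all_boot.

Set Implicit Arguments.
Unset Strict Implicit.
Unset Printing Implicit Defensive.

(* A finite multigraph: finite vertex and edge types, each edge has two ends.
   Parallel edges are allowed (distinct edges with the same ends). *)
Record mgraph := MGraph {
  vert : finType;
  edge : finType;
  src : edge -> vert;
  tgt : edge -> vert }.

Section MGraphDefs.
Variable G : mgraph.

Definition incident (v : vert G) (e : edge G) : bool :=
  (src e == v) || (tgt e == v).

Definition loopless : Prop := forall e : edge G, src e != tgt e.

(* degree of v = number of edges incident to v (correct for loopless graphs) *)
Definition degree (v : vert G) : nat := #|[set e | incident v e]|.

Definition cubic : Prop := forall v : vert G, degree v = 3.

Definition adj : rel (vert G) :=
  fun u v => [exists e : edge G,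
     ((src e == u) && (tgt e == v)) || ((src e == v) && (tgt e == u))].

Definition connected_minus (X : {set vert G}) : Prop :=
  forall x y : vert G, x \notin X -> y \notin X ->
    connect [rel a b | [&& a \notin X, b \notin X & adj a b]] x y.

Definition k_connected (k : nat) : Prop :=
  k < #|vert G| /\
  forall X : {set vert G}, #|X| < k -> connected_minus X.

Definition three_connected : Prop := k_connected 3.

(* proper k-edge-colorings with colors 'I_k (i.e. {1..k} shifted to {0..k-1}) *)
Definition proper_coloring (k : nat) (c : edge G -> 'I_k) : Prop :=
  forall e e' : edge G, e != e' ->
    forall v : vert G, incident v e -> incident v e' -> c e != c e'.

Definition Sc (k : nat) (c : edge G -> 'I_k) (v : vert G) : {set 'I_k} :=
  [set c e | e in [set e | incident v e]].

Definition union_size (k : nat) (c : edge G -> 'I_k) (e : edge G) : nat :=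
  #|Sc c (src e) :|: Sc c (tgt e)|.

Definition poor (k : nat) (c : edge G -> 'I_k) (e : edge G) : bool :=
  union_size c e == 3.

Definition rich (k : nat) (c : edge G -> 'I_k) (e : edge G) : bool :=
  union_size c e == 5.

Definition abnormal (k : nat) (c : edge G -> 'I_k) (e : edge G) : bool :=
  ~~ poor c e && ~~ rich c e.

Definition abnormal_edges (k : nat) (c : edge G -> 'I_k) : {set edge G} :=
  [set e | abnormal c e].

End MGraphDefs.

Definition sublinear (f : nat -> nat) : Prop :=
  Un_cv (fun n => Rdiv (INR (f n)) (INR n)) (IZR 0%Z).

(* Main.v *)
Require Import Defs.
From Stdlib Require Import Reals.
From mathcomp Require Import all_boot.
From mathcomp Require Import zify.
From Stdlib Require Import Lra Classical.
Set Implicit Arguments.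
Unset Strict Implicit.
Unset Printing Implicit Defensive.

Definition other (G : mgraph) (x : vert G) (e : edge G) :=
  if src e == x then tgt e else src e.

Lemma connect_closed (T : finType) (e : rel T) (S : pred T) :
  (forall a b, e a b -> S a -> S b) -> forall x y, connect e x y -> S x -> S y.
Proof.
move=> HS x y /connectP [p Hp ->]; elim: p x Hp => [|z p IH] x //= /andP [exz Hp] Sx.
by apply: IH Hp (HS _ _ exz Sx).
Qed.

Lemma adjC (G : mgraph) : symmetric (@adj G).
Proof.
move=> u v; apply/existsP/existsP => [] [e He]; exists e; by rewrite orbC.
Qed.

Lemma exists_out (T : finType) (A : {set T}) : #|A| < #|T| -> exists u, u \notin A.
Proof.
move=> H; case: (pickP (predC (mem A))) => [u Hu | H0]; first by exists u.
suff: #|T| <= #|A| by rewrite leqNgt H.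
rewrite -cardsT; apply: subset_leq_card; apply/subsetP => u _.
by move: (H0 u) => /= /negbFE.
Qed.

Lemma escape (G : mgraph) : loopless G -> three_connected G ->
  forall (X : {set vert G}) x, #|X| <= 2 -> x \notin X ->
  exists e, [/\ incident x e, other x e \notin X & other x e != x].
Proof.
move=> hl [H3 Hc] X x HX xX.
have [u Hu] : exists u, u \notin x |: X.
  apply: exists_out; apply: leq_ltn_trans H3; rewrite cardsU1 xX; exact: HX.
have uX : u \notin X by move: Hu; rewrite in_setU1 negb_or => /andP [].
have ux : u != x by move: Hu; rewrite in_setU1 negb_or => /andP [].
have := Hc X (leq_ltn_trans HX (ltnSn 2)) x u xX uX.
case/connectP => [[|y p]] /=; first by move=> _ E; rewrite E eqxx in ux.
case/andP => /and3P [_ yX /existsP [e He]] _ _.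
have hle := hl e.
exists e; rewrite /incident /other; case/orP: He => /andP [/eqP se /eqP te].
- rewrite se eqxx /=; split=> //; first by rewrite te.
  by move: hle; rewrite se eq_sym.
- rewrite te eqxx orbT; case: ifP => [/eqP yx|/negbT nx].
    by move: hle; rewrite yx te eqxx.
  by split=> //; rewrite se.
Qed.
Definition incs (H : mgraph) (x : vert H) : {set edge H} := [set e | incident x e].
Definition idx (H : mgraph) (x : vert H) (e : edge H) : 'I_3 :=
  inord (index e (enum (incs x))).
Definition lab (H : mgraph) (d : edge H) (x : vert H) (i : 'I_3) : edge H :=
  nth d (enum (incs x)) i.

Section Lab.
Variables (H : mgraph) (hc : cubic H).
Lemma size_incs (x : vert H) : size (enum (incs x)) = 3.
Proof. by rewrite -cardE; apply: hc. Qed.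
Lemma idx_val (x : vert H) e : incident x e -> (idx x e : nat) = index e (enum (incs x)).
Proof.
move=> he; rewrite /idx inordK // -[X in _ < X](size_incs x) index_mem mem_enum.
by rewrite inE.
Qed.
Lemma idx_inj (x : vert H) e e' : incident x e -> incident x e' -> idx x e = idx x e' -> e = e'.
Proof.
move=> he he' E; have := congr1 val E; rewrite /= !idx_val //.
by apply: index_inj; rewrite ?mem_enum ?inE.
Qed.
Lemma lab_inc d (x : vert H) i : incident x (lab d x i).
Proof.
have: lab d x i \in enum (incs x) by apply: mem_nth; rewrite size_incs.
by rewrite mem_enum inE.
Qed.
Lemma idx_lab d (x : vert H) i : idx x (lab d x i) = i.
Proof.
apply: val_inj; rewrite /= idx_val ?lab_inc // /lab index_uniq //.
  by rewrite size_incs.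
exact: enum_uniq.
Qed.
Lemma lab_idx d (x : vert H) e : incident x e -> lab d x (idx x e) = e.
Proof. by move=> he; apply: (@idx_inj x) => //; [exact: lab_inc | rewrite idx_lab]. Qed.
End Lab.
Section Inflate.
Variables (G : mgraph) (w : vert G) (e0 : edge G) (hlG : loopless G).

Definition labw (i : 'I_3) : edge G := lab e0 w i.
Definition port (i : 'I_3) : vert G := other w (labw i).
Lemma port_neq i : port i != w.
Proof.
rewrite /port /other; case: ifP => [/eqP <-|/negbT //]; by rewrite eq_sym hlG.
Qed.
Definition V0 := {u : vert G | u != w}.
Definition E0 := {g : edge G | ~~ incident w g}.
Lemma src_E0 (g : E0) : src (val g) != w.
Proof. by case: g => g /=; rewrite /incident negb_or => /andP []. Qed.
Lemma tgt_E0 (g : E0) : tgt (val g) != w.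
Proof. by case: g => g /=; rewrite /incident negb_or => /andP []. Qed.
Definition portS i : V0 := exist _ (port i) (port_neq i).
Definition srcS (g : E0) : V0 := exist _ (src (val g)) (src_E0 g).
Definition tgtS (g : E0) : V0 := exist _ (tgt (val g)) (tgt_E0 g).

Variable K : mgraph.
Definition Vi : finType := (vert K * V0)%type.
Definition Ei : finType := (edge K + (vert K * E0))%type.
Definition srci (e : Ei) : Vi :=
  match e with inl f => (src f, portS (idx (src f) f)) | inr (x, g) => (x, srcS g) end.
Definition tgti (e : Ei) : Vi :=
  match e with inl f => (tgt f, portS (idx (tgt f) f)) | inr (x, g) => (x, tgtS g) end.
Definition inflate : mgraph := @MGraph Vi Ei srci tgti.
Variables (hcG : cubic G) (hlK : loopless K) (hcK : cubic K).
Notation H := inflate.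

Lemma other_inc (J : mgraph) (x : vert J) e : incident (other x e) e.
Proof. by rewrite /other /incident; case: ifP => _; rewrite eqxx ?orbT. Qed.

Lemma other_eq (J : mgraph) (x y : vert J) e :
  incident x e -> incident y e -> y != x -> other x e = y.
Proof.
rewrite /incident /other => /orP [] /eqP hx /orP [] /eqP hy yx.
- by move: yx; rewrite -hx -hy eqxx.
- by rewrite hx eqxx.
- by case: ifP => [/eqP E|_ //]; move: yx; rewrite -hy E eqxx.
- by move: yx; rewrite -hx -hy eqxx.
Qed.

Lemma inc_inl (x : vert K) (u : V0) f :
  @incident H (x, u) (inl f) = incident x f && (port (idx x f) == val u).
Proof.
rewrite /incident /= !xpair_eqE -!val_eqE /=.
case: (boolP (src f == x)) => [/eqP sx|sx] /=.
- have: tgt f != x by rewrite -sx eq_sym hlK.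
  by move/negbTE => ->; rewrite sx orbF.
- case: (boolP (tgt f == x)) => [/eqP ->|] //=; by rewrite andbF.
Qed.

Lemma inc_inr (x : vert K) (u : V0) y g :
  @incident H (x, u) (inr (y, g)) = (y == x) && incident (val u) (val g).
Proof. by rewrite /incident /= !xpair_eqE -!val_eqE /= -andb_orr. Qed.

Lemma labw_inc i : incident w (labw i).
Proof. exact: lab_inc. Qed.
Lemma idx_labw i : idx w (labw i) = i.
Proof. exact: idx_lab. Qed.

Definition phi (x : vert K) (e : edge H) : edge G :=
  match e with inl f => labw (idx x f) | inr (_, g) => val g end.

Lemma inflate_loopless : loopless H.
Proof.
case=> [f|[x g]]; rewrite /= xpair_eqE negb_and.
- by rewrite hlK.
- by rewrite -val_eqE /= hlG orbT.
Qed.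

Lemma phi_image (x : vert K) (u : V0) :
  phi x @: [set e | @incident H (x, u) e] = [set g | incident (val u) g].
Proof.
have [dK _] : exists f, incident x f.
  have : 0 < #|incs x| by rewrite [#|_|]hcK.
  by case/card_gt0P => f; rewrite inE; exists f.
apply/setP => g; rewrite [in RHS]inE; apply/imsetP/idP.
- case=> [[f|[y g']]]; rewrite inE ?inc_inl ?inc_inr /= => He ->.
  + case/andP: He => _ /eqP <-; exact: other_inc.
  + by case/andP: He.
- move=> hg; case: (boolP (incident w g)) => hw.
  + exists (inl (lab dK x (idx w g))); last by rewrite /= idx_lab // /labw lab_idx.
    rewrite inE inc_inl lab_inc //= idx_lab // /port /labw lab_idx //.
    by rewrite (other_eq hw hg) // (valP u).
  + exists (inr (x, exist _ g hw)) => //.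
    by rewrite inE inc_inr eqxx.
Qed.

Lemma phi_inj (x : vert K) (u : V0) : {in [set e | @incident H (x, u) e] &, injective (phi x)}.
Proof.
  move=> [f|[y g]] [f'|[y' g']]; rewrite !inE ?inc_inl ?inc_inr /=.
  - case/andP=> hf _ /andP [hf' _] E.
    by congr inl; apply: (idx_inj hcK hf hf'); rewrite -(idx_labw (idx x f)) E idx_labw.
  - move=> _ _ E; have h : ~~ incident w (sval g') := valP g'.
    by move: h; rewrite -E labw_inc.
  - move=> _ _ E; have h : ~~ incident w (sval g) := valP g.
    by move: h; rewrite E labw_inc.
  - case/andP=> /eqP -> _ /andP [/eqP -> _] E; by rewrite (val_inj E).
Qed.

Lemma inflate_cubic : cubic H.
Proof.
move=> [x u]; rewrite /degree.
by rewrite -(card_in_imset (@phi_inj x u)) phi_image -[3](hcG (val u)).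
Qed.

Lemma cardsU_le (T : finType) (A B : {set T}) : #|A :|: B| <= #|A| + #|B|.
Proof. by rewrite cardsU leq_subr. Qed.

Definition pick_out (F : {set 'I_5}) : 'I_5 := odflt ord0 [pick k | k \notin F].
Lemma pick_outP (F : {set 'I_5}) : #|F| < 5 -> pick_out F \notin F.
Proof.
move=> h; rewrite /pick_out; case: pickP => [k //|H0].
have h' : #|F| < #|'I_5| by rewrite card_ord.
have [u hu] := exists_out h'.
by move: (H0 u) => /= ; rewrite hu.
Qed.

Lemma Sc_card3 (J : mgraph) (hJ : cubic J) (c : edge J -> 'I_5) v : #|Sc c v| <= 3.
Proof. by rewrite /Sc; apply: leq_trans (leq_imset_card _ _) _; rewrite -/(degree v) hJ. Qed.

Section Copy.
Variables (c : edge H -> 'I_5) (hc : proper_coloring c) (x : vert K) (dK : edge K).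

Definition i1 : 'I_3 := inord 1.
Definition i2 : 'I_3 := inord 2.
Definition gam (i : 'I_3) := c (inl (lab dK x i)).
Definition ScH (i : 'I_3) := Sc c ((x, portS i) : vert H).
Definition beta1 := pick_out ((ScH i1 :\ gam i1) :|: [set gam ord0]).
Definition beta2 := pick_out ((ScH i2 :\ gam i2) :|: [set gam ord0; beta1]).
Definition colw (i : 'I_3) :=
  if val i == 0 then gam ord0 else if val i == 1 then beta1 else beta2.
Definition col_int (g : edge G) : 'I_5 := oapp (fun g' => c (inr (x, g'))) ord0 (insub g).
Definition cG (g : edge G) : 'I_5 := if incident w g then colw (idx w g) else col_int g.

Lemma cG_int g (h : ~~ incident w g) : cG g = c (inr (x, exist _ g h)).
Proof.
rewrite /cG (negbTE h) /col_int insubT /=; do 3 f_equal; exact: val_inj.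
Qed.

Lemma conn_inc i : @incident H (x, portS i) (inl (lab dK x i)).
Proof. by rewrite inc_inl lab_inc // idx_lab // eqxx. Qed.

Lemma gam_in i : gam i \in ScH i.
Proof. by apply/imsetP; exists (inl (lab dK x i)); rewrite // inE conn_inc. Qed.

Lemma ScH_minus i : #|ScH i :\ gam i| <= 2.
Proof.
have := Sc_card3 inflate_cubic c ((x, portS i) : vert H).
by rewrite -/(ScH i) (cardsD1 (gam i)) gam_in.
Qed.

Lemma beta1P : beta1 \notin (ScH i1 :\ gam i1) :|: [set gam ord0].
Proof.
apply: pick_outP; apply: leq_ltn_trans (cardsU_le _ _) _.
by rewrite cards1 addn1 ltnS; apply: leq_ltn_trans (ScH_minus i1) _.
Qed.

Lemma beta2P : beta2 \notin (ScH i2 :\ gam i2) :|: [set gam ord0; beta1].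
Proof.
apply: pick_outP; apply: leq_ltn_trans (cardsU_le _ _) _.
rewrite cards2; apply: (@leq_ltn_trans (2 + 2)) => //.
by apply: leq_add; [exact: ScH_minus | case: (_ != _)].
Qed.

Lemma ord3_cases (i : 'I_3) : [\/ i = ord0, i = i1 | i = i2].
Proof.
case: i => [[|[|[|i]]] hi].
- by constructor 1; apply: val_inj.
- by constructor 2; apply: val_inj; rewrite /= inordK.
- by constructor 3; apply: val_inj; rewrite /= inordK.
- by [].
Qed.

Lemma colw0 : colw ord0 = gam ord0. Proof. by rewrite /colw. Qed.
Lemma colw1 : colw i1 = beta1.
Proof. rewrite /colw; have -> : val i1 = 1 by rewrite /= inordK. by []. Qed.
Lemma colw2 : colw i2 = beta2.
Proof. rewrite /colw; have -> : val i2 = 2 by rewrite /= inordK. by []. Qed.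

Lemma colw_inj i j : i != j -> colw i != colw j.
Proof.
have b1 := beta1P; have b2 := beta2P.
rewrite !in_setU !in_set1 !negb_or in b1 b2.
case/andP: b1 => _ b10; case/and3P: b2 => _ b20 b21.
case: (ord3_cases i) => ->; case: (ord3_cases j) => ->;
  rewrite ?colw0 ?colw1 ?colw2 ?eqxx //= => _;
  by rewrite ?b10 ?b20 ?b21 // eq_sym ?b10 ?b20 ?b21.
Qed.

Lemma colw_int i (g : E0) : @incident H (x, portS i) (inr (x, g)) -> colw i != c (inr (x, g)).
Proof.
move=> hinc.
have hne : c (inl (lab dK x i)) != c (inr (x, g)).
  by apply: hc (conn_inc i) hinc.
have hin : c (inr (x, g)) \in ScH i :\ gam i.
  by rewrite in_setD1 eq_sym hne; apply/imsetP; exists (inr (x, g)); rewrite // inE.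
have b1 := beta1P; have b2 := beta2P.
case: (ord3_cases i) => Ei; rewrite Ei in hin hne *.
- by rewrite colw0.
- rewrite colw1; apply: contraNneq b1 => ->; by rewrite in_setU hin.
- rewrite colw2; apply: contraNneq b2 => ->; by rewrite in_setU hin.
Qed.

Lemma not_w v (g : edge G) : ~~ incident w g -> incident v g -> v != w.
Proof. by move=> h hv; apply: contraNneq h => <-. Qed.

Lemma port_idx e v : incident w e -> incident v e -> v != w -> port (idx w e) = v.
Proof. by move=> hw hv vw; rewrite /port /labw lab_idx // (other_eq hw hv vw). Qed.

Lemma cG_mixed e e' v : incident w e -> ~~ incident w e' ->
  incident v e -> incident v e' -> cG e != cG e'.
Proof.
move=> hw hw' hv hv'.
rewrite (cG_int hw') /cG hw; apply: colw_int.
by rewrite inc_inr eqxx /= (port_idx hw hv (not_w hw' hv')).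
Qed.

Lemma cG_proper : proper_coloring cG.
Proof.
move=> e e' nee' v hv hv'.
case: (boolP (incident w e)) => hw; case: (boolP (incident w e')) => hw'.
- rewrite /cG hw hw'; apply: colw_inj; apply: contra nee' => /eqP E.
  by apply/eqP; apply: (idx_inj hcG hw hw' E).
- exact: cG_mixed hv hv'.
- by rewrite eq_sym; apply: cG_mixed hv' hv.
- rewrite (cG_int hw) (cG_int hw').
  have vw := not_w hw hv.
  have ne : (inr (x, exist _ e hw) : edge H) != inr (x, exist _ e' hw').
    by apply: contra nee' => /eqP [] ->.
  have h1 : @incident H (x, exist _ v vw) (inr (x, exist _ e hw)) by rewrite inc_inr eqxx.
  have h2 : @incident H (x, exist _ v vw) (inr (x, exist _ e' hw')) by rewrite inc_inr eqxx.
  exact: hc ne _ h1 h2.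
Qed.

Lemma Sc_eq (u : V0) : val u != port i1 -> val u != port i2 ->
  Sc cG (val u) = Sc c ((x, u) : vert H).
Proof.
move=> n1 n2; rewrite /Sc -(phi_image x u) -imset_comp; apply: eq_in_imset.
move=> [f|[y g]]; rewrite inE ?inc_inl ?inc_inr /=.
- case/andP=> hf /eqP hp0; have hp : port (idx x f) = val u := hp0.
  rewrite /cG labw_inc idx_labw.
  case: (ord3_cases (idx x f)) => Ei.
  + by rewrite Ei colw0 /gam -Ei lab_idx.
  + by move: n1; rewrite -hp Ei eqxx.
  + by move: n2; rewrite -hp Ei eqxx.
- case/andP=> /eqP -> _; rewrite (cG_int (valP g)); do 3 f_equal; exact: val_inj.
Qed.

Lemma abn_eq (g : E0) : ~~ incident (port i1) (val g) -> ~~ incident (port i2) (val g) ->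
  abnormal cG (val g) = abnormal c (inr (x, g)).
Proof.
rewrite /incident !negb_or => /andP [s1 t1] /andP [s2 t2].
have E1 : Sc cG (src (sval g)) = Sc c ((x, srcS g) : vert H) by apply: (Sc_eq (u := srcS g)).
have E2 : Sc cG (tgt (sval g)) = Sc c ((x, tgtS g) : vert H) by apply: (Sc_eq (u := tgtS g)).
by rewrite /abnormal /poor /rich /union_size /= E1 E2.
Qed.

Lemma copy_abnormal :
  (forall c : edge G -> 'I_5, proper_coloring c -> 7 < #|abnormal_edges c|) ->
  exists g : E0, inr (x, g) \in abnormal_edges c.
Proof.
move=> hG; case: (pickP (fun g : E0 => inr (x, g) \in abnormal_edges c)) => [g hg|hn].
  by exists g.
exfalso; have := hG _ cG_proper; apply/negP; rewrite -leqNgt.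
have sub : abnormal_edges cG \subset
    incs w :|: (incs (port i1) :\ labw i1) :|: (incs (port i2) :\ labw i2).
  apply/subsetP => g; rewrite !inE => ha.
  case: (boolP (incident w g)) => hw //=.
  case: (boolP (incident (port i1) g)) => h1.
    have n1 : g != labw i1 by apply/eqP => E; move: hw; rewrite E labw_inc.
    by rewrite n1 ?h1 ?andbT ?orbT.
  case: (boolP (incident (port i2) g)) => h2.
    have n2 : g != labw i2 by apply/eqP => E; move: hw; rewrite E labw_inc.
    by rewrite n2 ?h2 ?andbT ?orbT.
  have := hn (exist _ g hw); rewrite /= inE -(abn_eq (g := exist _ g hw)) //=.
  by rewrite ha.
apply: leq_trans (subset_leq_card sub) _.
apply: leq_trans (cardsU_le _ _) _.
apply: (@leq_trans (3 + 2 + 2)) => //.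
have inc1 : forall i, labw i \in incs (port i) by move=> i; rewrite inE /port; exact: other_inc.
apply: leq_add; [apply: leq_trans (cardsU_le _ _) _; apply: leq_add|].
- by rewrite [#|_|]hcG.
- by have := hcG (port i1); rewrite /degree -/(incs (port i1)) (cardsD1 (labw i1)) inc1 add1n => [[->]].
- by have := hcG (port i2); rewrite /degree -/(incs (port i2)) (cardsD1 (labw i2)) inc1 add1n => [[->]].
Qed.
End Copy.

Lemma card_V0 : #|{: V0}| = #|vert G|.-1.
Proof.
rewrite card_sig -(cardsC1 w); apply: eq_card => u; by rewrite !inE.
Qed.

Lemma card_inflate : #|vert H| = #|vert K| * #|vert G|.-1.
Proof. by rewrite /= card_prod card_V0. Qed.

Definition own (e : edge H) : option (vert K) :=
  match e with inr (y, _) => Some y | _ => None end.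

Lemma inflate_abnormal :
  (forall c : edge G -> 'I_5, proper_coloring c -> 7 < #|abnormal_edges c|) ->
  forall c : edge H -> 'I_5, proper_coloring c -> #|vert K| <= #|abnormal_edges c|.
Proof.
move=> hG c hc.
have sub : [set Some x | x : vert K] \subset own @: abnormal_edges c.
  apply/subsetP => o /imsetP [x _ ->].
  have [dK _] : exists f, incident x f.
    have : 0 < #|incs x| by rewrite [#|_|]hcK.
    by case/card_gt0P => f; rewrite inE; exists f.
  have [g hg] := copy_abnormal hc x dK hG.
  by apply/imsetP; exists (inr (x, g)).
have e : #|[set Some x | x : vert K]| = #|vert K| by rewrite card_imset //; move=> ? ? [->].
have := subset_leq_card sub; rewrite e.
move=> h; apply: leq_trans h _; exact: leq_imset_card.
Qed.

Definition crel (J : mgraph) (Z : {set vert J}) : rel (vert J) :=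
  [rel a b | [&& a \notin Z, b \notin Z & adj a b]].

Lemma crel_sym (J : mgraph) (Z : {set vert J}) : symmetric (crel Z).
Proof. by move=> a b; rewrite /crel /= adjC andbCA. Qed.

Lemma adj_int x (a b : V0) : adj (val a) (val b) -> @adj H (x, a) (x, b).
Proof.
case/existsP => e he.
have pa : val a != w := valP a.
have pb : val b != w := valP b.
have hw : ~~ incident w e.
  by rewrite /incident; case/orP: he => /andP [/eqP -> /eqP ->]; rewrite negb_or pa pb.
apply/existsP; exists (inr (x, exist _ e hw)); rewrite /= !xpair_eqE eqxx /=.
by rewrite -!val_eqE /=.
Qed.

Lemma other_neq (J : mgraph) (hJ : loopless J) (x : vert J) f :
  incident x f -> other x f != x.
Proof.
rewrite /other /incident; case: ifP => [/eqP <- _|/negbT h /= /eqP <-].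
  by rewrite eq_sym hJ.
by rewrite hJ.
Qed.

Lemma adj_conn x f : incident x f ->
  @adj H (x, portS (idx x f)) (other x f, portS (idx (other x f) f)).
Proof.
move=> hf; apply/existsP; exists (inl f); rewrite /= !xpair_eqE.
rewrite /other; move: hf; rewrite /incident.
case: ifP => [/eqP sx _|/negbT sx /= /eqP tx].
  by rewrite sx !eqxx.
by rewrite tx !eqxx.
Qed.

Lemma port_inj : three_connected G -> injective port.
Proof.
move=> h3 i j E; apply/eqP; apply/negP => /negP nij.
have hl := escape hlG h3 (X := [set port l | l in [set~ i]]).
have [e [he ho _]] : exists e, [/\ incident w e,
    other w e \notin [set port l | l in [set~ i]] & other w e != w].
  apply: hl; last first.
    apply/imsetP => [[l _ El]]; by move: (port_neq l); rewrite -El eqxx.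
  apply: leq_trans (leq_imset_card _ _) _.
  by rewrite cardsC1 card_ord.
move: ho; rewrite -(lab_idx hcG e0 he) -/(labw _) -/(port _).
case: (boolP (idx w e == i)) => [/eqP ->|ne].
  by rewrite E; move/negP; apply; apply/imsetP; exists j; rewrite // !inE eq_sym.
by move/negP; apply; apply/imsetP; exists (idx w e); rewrite // !inE.
Qed.

Lemma adj_edge (J : mgraph) (a b : vert J) : adj a b -> exists e, incident a e && incident b e.
Proof.
case/existsP => e he; exists e; rewrite /incident.
by case/orP: he => /andP [-> ->]; rewrite ?orbT.
Qed.

Lemma adj_neq (J : mgraph) (hJ : loopless J) (a b : vert J) : adj a b -> b != a.
Proof.
case/existsP => e; case/orP => /andP [/eqP <- /eqP <-]; by rewrite ?hJ // eq_sym hJ.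
Qed.

Definition Xx (X : {set vert H}) (x : vert K) : {set V0} := [set u | (x, u) \in X].
Definition Zx (X : {set vert H}) (x : vert K) : {set vert G} := val @: Xx X x.

Lemma Zx_notin (X : {set vert H}) (x : vert K) (u : V0) : (x, u) \notin X -> val u \notin w |: Zx X x.
Proof.
move=> hu; rewrite in_setU1 negb_or (valP u) /=.
apply/imsetP => [[u2]]; rewrite inE => hu2 /val_inj E.
by move: hu; rewrite E hu2.
Qed.

Lemma notin_Zx (X : {set vert H}) (x : vert K) (u : V0) : val u \notin Zx X x -> (x, u) \notin X.
Proof.
apply: contra => hu; apply/imsetP; exists u => //; by rewrite inE.
Qed.

Lemma w_notin_Zx (X : {set vert H}) (x : vert K) : w \notin Zx X x.
Proof. apply/imsetP => [[u _ E]]; by move: (valP u); rewrite /= -E eqxx. Qed.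

Lemma card_Xx (X : {set vert H}) (x : vert K) : #|Xx X x| <= #|X|.
Proof.
rewrite -(card_imset _ (f := fun u : V0 => ((x, u) : vert H))); last by move=> ? ? [].
apply: subset_leq_card; apply/subsetP => p /imsetP [u]; by rewrite inE => h ->.
Qed.

Lemma card_Xx_lt (X : {set vert H}) (x : vert K) (p : vert H) : p \in X -> p.1 != x -> #|Xx X x| < #|X|.
Proof.
move=> hp hx.
rewrite -(card_imset _ (f := fun u : V0 => ((x, u) : vert H))); last by move=> ? ? [].
rewrite (cardsD1 p X) hp add1n ltnS.
apply: subset_leq_card; apply/subsetP => q /imsetP [u]; rewrite inE => h ->.
rewrite in_setD1 h andbT; apply: contra hx => /eqP <-; by [].
Qed.

Lemma card_Zx (X : {set vert H}) (x : vert K) : #|Zx X x| <= #|X|.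
Proof. exact: leq_trans (leq_imset_card _ _) (card_Xx X x). Qed.

Lemma lift_copy (X : {set vert H}) (x : vert K) (u u' : V0) : (x, u') \notin X ->
  connect (crel (w |: Zx X x)) (val u) (val u') -> connect (crel X) (x, u) (x, u').
Proof.
move=> hu' hc.
pose S := [pred v : vert G | (v \in w |: Zx X x) ||
   [exists u2 : V0, (val u2 == v) && connect (crel X) (x, u) (x, u2)]].
have HS : forall a b, crel (w |: Zx X x) a b -> S a -> S b.
  move=> a b /and3P [ha hb hab] /orP [hh|]; first by rewrite hh in ha.
  case/existsP => u2 /andP [/eqP E2 hc2].
  have bw : b != w by apply: contraNneq hb => ->; exact: setU11.
  apply/orP; right; apply/existsP; exists (exist _ b bw); rewrite eqxx /=.
  apply: connect_trans hc2 (connect1 _); apply/and3P; split.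
  + by apply: notin_Zx; apply: contra ha; rewrite -E2 => h; rewrite in_setU1 h orbT.
  + by apply: notin_Zx; apply: contra hb => h; rewrite in_setU1 h orbT.
  + by apply: adj_int; rewrite E2.
have Su : S (val u) by apply/orP; right; apply/existsP; exists u; rewrite eqxx connect0.
have := connect_closed HS hc Su.
  case/orP => [h|]; first by move: (Zx_notin hu'); rewrite h.
  by case/existsP => u2 /andP [/eqP /val_inj -> ->].
Qed.

Variables (h3G : three_connected G) (h3K : three_connected K).

Lemma copy_conn (X : {set vert H}) (x : vert K) (u u' : V0) : #|Zx X x| <= 1 -> (x, u) \notin X -> (x, u') \notin X ->
  connect (crel X) (x, u) (x, u').
Proof.
move=> hZ hu hu'; apply: (@lift_copy X x u u' hu').
apply: (h3G.2 (w |: Zx X x)); last 2 first.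
- exact: Zx_notin.
- exact: Zx_notin.
by rewrite cardsU1 w_notin_Zx add1n ltnS ltnS.
Qed.

Lemma copy_port (X : {set vert H}) (x : vert K) (u : V0) : #|Zx X x| <= 2 -> (x, u) \notin X ->
  exists i, (x, portS i) \notin X /\ connect (crel X) (x, u) (x, portS i).
Proof.
move=> hZ hu.
case: (pickP (fun i => (port i \notin Zx X x) &&
    connect (crel (w |: Zx X x)) (val u) (port i))) => [i /andP [h1 h2]|hn].
  exists i; split; first exact: notin_Zx.
  by apply: (@lift_copy X x u (portS i)) => //; exact: notin_Zx.
exfalso.
have hc := h3G.2 (Zx X x) (leq_ltn_trans hZ (ltnSn 2)) (val u) w.
have uZ : val u \notin Zx X x.
  by move: (Zx_notin hu); rewrite in_setU1 negb_or => /andP [].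
have := hc uZ (w_notin_Zx X x).
pose S := [pred a : vert G | (a != w) && connect (crel (w |: Zx X x)) (val u) a].
have HS : forall a b, crel (Zx X x) a b -> S a -> S b.
  move=> a b /and3P [ha hb hab] /andP [aw hca].
  case: (boolP (b == w)) => [/eqP bw|bw].
    subst b; have [e /andP [hae hwe]] := adj_edge hab.
    have := hn (idx w e); rewrite (port_idx hwe hae aw) ha hca //.
  rewrite /= bw /=; apply: connect_trans hca (connect1 _).
  by rewrite /crel /= !in_setU1 (negbTE aw) (negbTE bw) ha hb hab.
have Su : S (val u) by rewrite /= (valP u) connect0.
move=> hc2; have := connect_closed HS hc2 Su.
by rewrite /= eqxx.
Qed.

Lemma notinD (X : {set vert H}) (p : vert H) : p.1 \notin [set q.1 | q in X] -> p \notin X.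
Proof. by apply: contra => hp; apply/imsetP; exists p. Qed.

Lemma Zx0 (X : {set vert H}) (x : vert K) : x \notin [set q.1 | q in X] -> #|Zx X x| <= 1.
Proof.
move=> hx; rewrite (_ : Zx X x = set0) ?cards0 //.
apply/setP => v; rewrite inE; apply/imsetP => [[u]]; rewrite inE => h _.
by move: hx => /imsetP; apply; exists (x, u).
Qed.

Lemma inflate_3conn : three_connected H.
Proof.
split.
  rewrite card_inflate; case: h3K => hK _; case: h3G => hG _.
  apply: (@leq_trans (4 * 3)) => //; apply: leq_mul => //.
  by rewrite -ltnS (ltn_predK hG).
move=> X hX.
set D := [set q.1 | q in X].
have hD : #|D| <= 2 by rewrite -ltnS; exact: leq_ltn_trans (leq_imset_card _ _) hX.
have R_sym := crel_sym X.
have good : forall (x y : vert K) (u u' : V0), x \notin D -> y \notin D ->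
    connect (crel X) (x, u) (y, u').
  move=> x y u u' hx hy.
  have hc := h3K.2 D (leq_ltn_trans hD (ltnSn 2)) x y hx hy.
  pose S := [pred z : vert K | (z \notin D) && [forall u2 : V0, connect (crel X) (x, u) (z, u2)]].
  have HS : forall a b, crel D a b -> S a -> S b.
    move=> a b /and3P [ha hb hab] /andP [_ /forallP hca].
    rewrite /= hb /=; apply/forallP => u2.
    have [f /andP [haf hbf]] := adj_edge hab.
    have ob : other a f = b by apply: other_eq => //; exact: adj_neq hab.
    apply: connect_trans (hca (portS (idx a f))) _.
    apply: connect_trans (connect1 _) (@copy_conn X b (portS (idx b f)) u2 (Zx0 hb) (notinD (p := (b, _)) hb) (notinD (p := (b, u2)) hb)).
    - rewrite /crel /= (notinD (p := (a, _)) ha) (notinD (p := (b, _)) hb) /=.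
      by rewrite -ob; exact: adj_conn.
  have Sx : S x.
    rewrite /= hx /=; apply/forallP => u2.
    exact: (@copy_conn X x u u2 (Zx0 hx) (notinD (p := (x, _)) hx) (notinD (p := (x, _)) hx)).
  by have := connect_closed HS hc Sx => /andP [_ /forallP ->].
have to_good : forall a : vert H, a \notin X -> exists b : vert H, b.1 \notin D /\ connect (crel X) a b.
  move=> [x u] hxu.
  case: (boolP (x \in D)) => xD; last by exists (x, u); split; rewrite ?connect0.
  have [dK _] : exists f, incident x f.
    have : 0 < #|incs x| by rewrite [#|_|]hcK.
    by case/card_gt0P => f; rewrite inE; exists f.
  case: (pickP (fun z => z \in D :\ x)) => [x' hx'|hn].
  - have [p hp hpx] : exists2 p, p \in X & p.1 = x'.
      by move: hx'; rewrite in_setD1 => /andP [_ /imsetP [p hp ->]]; exists p.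
    have hZ : #|Zx X x| <= 1.
      apply: leq_trans (leq_imset_card _ _) _; rewrite -ltnS.
      apply: leq_trans (card_Xx_lt hp _) _ => //.
      by rewrite hpx; move: hx'; rewrite in_setD1 => /andP [].
    pose J := [set j : 'I_3 | port j \in Zx X x].
    pose D' := (D :\ x) :|: [set other x (lab dK x j) | j in J].
    have hD' : #|D'| <= 2.
      apply: leq_trans (cardsU_le _ _) _.
      have h1 : #|D :\ x| <= 1.
        by move: hD; rewrite (cardsD1 x) xD add1n ltnS.
      have h2 : #|[set other x (lab dK x j) | j in J]| <= 1.
        apply: leq_trans (leq_imset_card _ _) _; apply: leq_trans _ hZ.
        rewrite -(card_imset _ (port_inj h3G)); apply: subset_leq_card.
        by apply/subsetP => v /imsetP [j]; rewrite inE => hj ->.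
      exact: leq_add h1 h2.
    have xD' : x \notin D'.
      rewrite in_setU in_setD1 eqxx /=; apply/imsetP => [[j _ E]].
      by move: (other_neq hlK (lab_inc hcK dK x j)); rewrite -E eqxx.
    have [f [hf yD' yx]] := escape hlK h3K hD' xD'.
    have fl : lab dK x (idx x f) = f by apply: lab_idx.
    have pj : port (idx x f) \notin Zx X x.
      apply: contra yD' => hj; rewrite in_setU; apply/orP; right.
      by apply/imsetP; exists (idx x f); rewrite ?inE ?fl.
    have yD : other x f \notin D.
      by move: yD'; rewrite in_setU in_setD1 yx negb_or => /andP [].
    exists (other x f, portS (idx (other x f) f)); split => //.
    apply: connect_trans (@copy_conn X x u (portS (idx x f)) hZ hxu (@notin_Zx X x (portS (idx x f)) pj)) _.
    apply: connect1; rewrite /crel /= (@notin_Zx X x (portS (idx x f)) pj) (notinD (p := (other x f, _)) yD) /=.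
    exact: adj_conn.
  - have hZ : #|Zx X x| <= 2 by rewrite -ltnS; exact: leq_ltn_trans (card_Zx X x) hX.
    have [i [hi hci]] := copy_port hZ hxu.
    pose f := lab dK x i.
    have hf : incident x f by apply: lab_inc.
    have yD : other x f \notin D.
      apply/negP => h; have := hn (other x f); rewrite /= in_setD1 h andbT.
      by rewrite (other_neq hlK hf).
    exists (other x f, portS (idx (other x f) f)); split => //.
    apply: connect_trans hci (connect1 _).
    rewrite /crel /= hi (notinD (p := (other x f, _)) yD) /=.
    have := adj_conn hf; by rewrite /f idx_lab.
move=> a b ha hb.
have [a' [ha' hca]] := to_good a ha.
have [b' [hb' hcb]] := to_good b hb.
apply: connect_trans hca _; rewrite (sym_connect_sym R_sym) in hcb.
case: a' b' ha' hb' hcb => [x u] [y u'] /= hx hy hcb.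
exact: connect_trans (good x y u u' hx hy) hcb.
Qed.
End Inflate.

Section Reals.
Local Open Scope R_scope.
Lemma real_contra (a b k : nat) : (0 < b)%N -> (0 < k)%N -> (b <= a * k)%N ->
  ~ (R_dist (INR a / INR b) 0 < / INR k).
Proof.
move=> hb hk hle H.
have Hb : (0 < INR b) by apply: lt_0_INR; apply/ltP.
have Hk : (0 < INR k) by apply: lt_0_INR; apply/ltP.
have Hle : (INR b <= INR a * INR k).
  rewrite -mult_INR; apply: le_INR; apply/leP; rewrite -multE in hle; exact: hle.
have H1 : (INR a / INR b < / INR k).
  apply: Rle_lt_trans H; rewrite /R_dist Rminus_0_r; exact: Rle_abs.
have H2 : (INR a / INR b * (INR b * INR k) < / INR k * (INR b * INR k)).
  by apply: Rmult_lt_compat_r => //; apply: Rmult_lt_0_compat.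
have E1 : (INR a / INR b * (INR b * INR k) = INR a * INR k) by field; lra.
have E2 : (/ INR k * (INR b * INR k) = INR b) by field; lra.
rewrite E1 E2 in H2; lra.
Qed.

Lemma sub7 : Un_cv (fun n => Rdiv (INR 7) (INR n)) (IZR 0%Z).
Proof.
move=> eps he.
have [N HN] := INR_archimed eps (INR 7) he.
exists N.+1 => n hn.
have hn' : (N <= n)%coq_nat by apply/leP; move/leP: hn => hn; apply: ltnW.
have Hn : (0 < INR n) by apply: lt_0_INR; move/leP: hn => hn; apply/ltP; apply: leq_trans hn.
have HNn : (INR N <= INR n) by apply: le_INR.
rewrite /R_dist Rminus_0_r Rabs_pos_eq; last first.
  apply: Rmult_le_pos; [apply: pos_INR | apply: Rlt_le; apply: Rinv_0_lt_compat => //].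
have H1 : (INR 7 < INR n * eps).
  apply: Rlt_le_trans (Rgt_lt _ _ HN) _; apply: Rmult_le_compat_r => //; lra.
apply: (Rmult_lt_reg_r (INR n)) => //.
have E : (INR 7 / INR n * INR n = INR 7) by field; lra.
rewrite E; lra.
Qed.
End Reals.

Section Final.
Variables (G : mgraph) (w : vert G) (e0 : edge G) (hlG : loopless G) (hcG : cubic G)
  (h3G : three_connected G).

Fixpoint iterK (j : nat) : mgraph :=
  match j with 0 => G | S j => inflate w e0 hlG (iterK j) end.

Lemma iterK_good j : [/\ loopless (iterK j), cubic (iterK j) & three_connected (iterK j)].
Proof.
elim: j => [|j [l c t]] /=; first by split.
split; [exact: inflate_loopless | exact: inflate_cubic | exact: inflate_3conn].
Qed.

Lemma iterK_card j : j < #|vert (iterK j)|.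
Proof.
have hG := h3G.1.
elim: j => [|j IH] /=; first by apply: leq_ltn_trans hG.
rewrite (card_inflate w e0 hlG (iterK j)).
have : 3 <= #|vert G|.-1 by rewrite -ltnS (ltn_predK hG).
move: (#|vert G|.-1) (#|vert (iterK j)|) IH => k a; nia.

Qed.
End Final.

Theorem mainTheorem3 :
  (forall G : mgraph, loopless G -> cubic G -> three_connected G ->
     exists c : edge G -> 'I_5,
       proper_coloring c /\ #|abnormal_edges c| <= 7)
  <->
  (exists f : nat -> nat, sublinear f /\
     forall G : mgraph, loopless G -> cubic G -> three_connected G ->
       exists c : edge G -> 'I_5,
         proper_coloring c /\ #|abnormal_edges c| <= f #|vert G|).
Proof.
split.
  move=> ha; exists (fun _ => 7); split; first exact: sub7.
  by move=> G l c t; have [c' [pc hc']] := ha G l c t; exists c'.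
case=> f [hf hb] G hl hc h3.
case: (classic (exists c : edge G -> 'I_5,
   proper_coloring c /\ #|abnormal_edges c| <= 7)) => // hn; exfalso.
have hG : forall c : edge G -> 'I_5, proper_coloring c -> 7 < #|abnormal_edges c|.
  move=> c pc; rewrite ltnNge; apply/negP => h; apply: hn; by exists c.
have [w _] : exists w : vert G, true.
  have : 0 < #|vert G| by apply: leq_ltn_trans h3.1.
  by case/card_gt0P => w _; exists w.
have [e0 _] : exists e : edge G, incident w e.
  have : 0 < #|incs w| by rewrite [#|_|]hc.
  by case/card_gt0P => e; rewrite inE; exists e.
have hG3 := h3.1.
have hk : 3 <= #|vert G|.-1 by rewrite -ltnS (ltn_predK hG3).
have hkR : Rlt 0 (Rinv (INR #|vert G|.-1)).
  apply: Rinv_0_lt_compat; apply: lt_0_INR; apply/ltP; exact: leq_trans hk.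
have [N0 HN0] := hf _ hkR.
pose K := iterK w e0 hl N0.
have [lK cK tK] := iterK_good w e0 hl hc h3 N0.
have [lK' cK' tK'] := iterK_good w e0 hl hc h3 N0.+1.
have [c [pc hcle]] := hb _ lK' cK' tK'.
have habn := inflate_abnormal hc lK cK hG pc.
have hcard := card_inflate w e0 hl (iterK w e0 hl N0).
set N := #|vert (iterK w e0 hl N0.+1)| in hcle hcard.

have hN : N0 < N by apply: ltnW; exact: (iterK_card w e0 hl h3 N0.+1).
apply: (@real_contra (f N) N #|vert G|.-1).
- exact: leq_ltn_trans hN.
- exact: leq_trans hk.
- rewrite {1}hcard leq_mul2r; apply/orP; right.
  exact: leq_trans habn hcle.
- apply: HN0; apply/leP; exact: ltnW.
Qed.
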